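(* Let $G=(V,E)$ be an atomic bispanning graph, $v\in V$ a vertex of degree $3$ with neighbours $x,y,z$ and incident edges $e_x,e_y,e_z$. Let $(S,T)$ be a pair of disjoint spanning trees of $G$ with $S\cup T=E$, and let $e_c$ be the attachment edge, $e_a$ the cycle edge and $e_b$ the non-cycle edge of $v$ and $(S,T)$. Then $(e_c,e_a,S,T)$ is an arc of $\vec\tau_3(G)$, i.e. $(e_c,e_a)$ is a unique edge exchange for $(S,T)$.
   Context: Graphs are finite, undirected, possibly with parallel edges, no loops. A spanning tree is $T\subseteq E$ with $(V,T)$ connected and acyclic; bispanning means $E$ is the union of two disjoint spanning trees; atomic means the only bispanning subgraphs are the graph itself and single vertices. For a spanning tree $T$ and $e\notin T$, $C_G(T,e)$ is the edge set of the unique cycle in $T\cup\{e\}$; for $e\in T$, $D_G(T,e)$ is the set of edges of $G$ with one end in each component of $(V,T\setminus\{e\})$. $(e,f,S,T)$ is an arc of $\vec\tau_3(G)$ iff either $e\in S,f\in T$ and $D_G(S,e)\cap C_G(T,e)=\{e,f\}$, or $e\in T,f\in S$ and $D_G(T,e)\cap C_G(S,e)=\{e,f\}$. Among $e_x,e_y,e_z$ exactly one lies in a different tree from the other two; it is the attachment edge $e_c$; of the other two, the one contained in the fundamental cycle $C_G(\cdot,e_c)$ of $e_c$ with respect to the tree not containing $e_c$ is the cycle edge $e_a$, the other the non-cycle edge $e_b$. *)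

(* Defs.v *)
From mathcomp Require Import all_boot.
Set Implicit Arguments. Unset Strict Implicit. Unset Printing Implicit Defensive.

(* Finite multigraphs: vertex type V, edge type E (both finite), and an
   endpoint map [ends : E -> V * V]; parallel edges are allowed, loops are
   excluded by a hypothesis of the main theorem. *)
Section MultiGraph.
Variables (V E : finType) (ends : E -> V * V).

Definition src (e : E) : V := (ends e).1.
Definition tgt (e : E) : V := (ends e).2.

Definition joins (e : E) (u w : V) : bool :=
  ((src e == u) && (tgt e == w)) || ((src e == w) && (tgt e == u)).

Definition incident (v : V) (e : E) : bool := (src e == v) || (tgt e == v).

Definition adj (F : {set E}) : rel V := fun u w => [exists e in F, joins e u w].

Definition conn (F : {set E}) : rel V := connect (adj F).

Definition deg (C : {set E}) (v : V) : nat := #|[set e in C | incident v e]|.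

Definition is_cycle (C : {set E}) : bool :=
  [&& C != set0,
      [forall v, (deg C v == 0) || (deg C v == 2)] &
      [forall u, forall w, ((0 < deg C u) && (0 < deg C w)) ==> conn C u w]].

Definition acyclic (F : {set E}) : Prop :=
  forall C : {set E}, C \subset F -> ~~ is_cycle C.

Definition inside (W : {set V}) (F : {set E}) : Prop :=
  forall e, e \in F -> src e \in W /\ tgt e \in W.

Definition spanning_tree_on (W : {set V}) (F : {set E}) : Prop :=
  [/\ inside W F, (forall u w, u \in W -> w \in W -> conn F u w) & acyclic F].

Definition spanning_tree (T : {set E}) : Prop := spanning_tree_on setT T.

Definition bispanning_on (W : {set V}) (F : {set E}) : Prop :=
  exists S T : {set E},
    [/\ [disjoint S & T], S :|: T = F, spanning_tree_on W S & spanning_tree_on W T].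

Definition bispanning : Prop := bispanning_on setT setT.

Definition atomic : Prop :=
  forall (W : {set V}) (F : {set E}), W != set0 -> inside W F ->
    bispanning_on W F -> (W = setT /\ F = setT) \/ #|W| = 1.

(* C_G(T,e): edge set of the unique cycle of T ∪ {e} (for e ∉ T) *)
Definition fund_cycle (T : {set E}) (e : E) : {set E} :=
  odflt set0 [pick C : {set E} | is_cycle C && (C \subset e |: T)].

(* D_G(T,e): edges with one end in each component of (V, T \ {e}) (for e ∈ T) *)
Definition fund_cut (T : {set E}) (e : E) : {set E} :=
  [set f | (conn (T :\ e) (src f) (src e) && conn (T :\ e) (tgt f) (tgt e))
        || (conn (T :\ e) (src f) (tgt e) && conn (T :\ e) (tgt f) (src e))].

Definition tau3_arc (e f : E) (S T : {set E}) : Prop :=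
  (e \in S /\ f \in T /\ fund_cut S e :&: fund_cycle T e = [set e; f])
  \/ (e \in T /\ f \in S /\ fund_cut T e :&: fund_cycle S e = [set e; f]).

End MultiGraph.

(* Main.v *)
Require Import Defs.
From mathcomp Require Import all_boot.

Section Key.
Variables (V E : finType) (ends : E -> V * V).
Hypothesis Hnoloop : forall e : E, (ends e).1 != (ends e).2.
Variables (A B : {set E}) (v : V) (ec ea eb : E).
Hypothesis HAB : [disjoint A & B].
Hypothesis HAc : forall u w, conn ends A u w.
Hypothesis HBa : acyclic ends B.
Hypothesis Hinc0 : [set e | incident ends v e] = [set ec; ea; eb].
Hypothesis HecA : ec \in A.
Hypothesis HeaB : ea \in B.
Hypothesis HebB : eb \in B.
Hypothesis HeaC : ea \in fund_cycle ends B ec.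
Hypothesis HebC : eb \notin fund_cycle ends B ec.

Lemma Hinc e : incident ends v e = (e \in [set ec; ea; eb]).
Proof. by rewrite -Hinc0 inE. Qed.

Lemma F1 e : e \in A -> incident ends v e -> e = ec.
Proof.
move=> eA; rewrite Hinc !inE => /orP [/orP [/eqP //|/eqP He]|/eqP He]; rewrite He in eA.
- by have := HeaB; rewrite (disjointFr HAB eA).
- by have := HebB; rewrite (disjointFr HAB eA).
Qed.

Lemma adj_to_v s : adj ends A s v -> s <> v /\ (s = src ends ec \/ s = tgt ends ec).
Proof.
case/existsP=> e /andP [eA je].
have ie : incident ends v e.
  by rewrite /incident; case/orP: je => /andP [h1 h2]; rewrite ?h1 ?h2 ?orbT.
have := F1 _ eA ie => Ee; subst e.
have nl := Hnoloop ec; rewrite /src /tgt in je *.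
case/orP: je => /andP [/eqP h1 /eqP h2]; rewrite /src /tgt in h1 h2; split;
  try (move=> hs; move: nl; rewrite h1 h2 hs eqxx; by []);
  first [left; by rewrite ?h1 ?h2 | right; by rewrite ?h1 ?h2].
Qed.

Lemma adj_from_v s : adj ends A v s -> s <> v /\ (s = src ends ec \/ s = tgt ends ec).
Proof.
case/existsP=> e /andP [eA je].
have ie : incident ends v e.
  by rewrite /incident; case/orP: je => /andP [h1 h2]; rewrite ?h1 ?h2 ?orbT.
have := F1 _ eA ie => Ee; subst e.
have nl := Hnoloop ec; rewrite /src /tgt in je *.
case/orP: je => /andP [/eqP h1 /eqP h2]; rewrite /src /tgt in h1 h2; split;
  try (move=> hs; move: nl; rewrite h1 h2 hs eqxx; by []);
  first [left; by rewrite ?h1 ?h2 | right; by rewrite ?h1 ?h2].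
Qed.

Lemma ec_inc : src ends ec = v \/ tgt ends ec = v.
Proof.
have : incident ends v ec by rewrite Hinc !inE eqxx.
by case/orP => /eqP; [left|right].
Qed.

Lemma other_uniq s q : s <> v -> q <> v -> (s = src ends ec \/ s = tgt ends ec) ->
  (q = src ends ec \/ q = tgt ends ec) -> s = q.
Proof.
move=> h1 h2 h3 h4; case: ec_inc => h5; case: h3 => h3; case: h4 => h4; congruence.
Qed.

Definition R := A :\ ec.

Lemma K2 a b : a != v -> b != v -> conn ends R a b.
Proof.
move=> av bv.
have := HAc a b; rewrite /conn => /connectP [p pth lastE].
case: (shortenP pth) lastE => p' pth' up' _ lastE.
have vnot : v \notin a :: p'.
  rewrite inE negb_or eq_sym av /=; apply/negP => vp.
  case/splitPr: vp pth' up' lastE => p1 p2 pth' up' lastE.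
  case: p2 pth' up' lastE => [|q p3] pth' up' lastE.
    by move: bv; rewrite lastE last_cat /= eqxx.
  rewrite cat_path /= in pth'.
  case/and3P: pth' => _ h1 /andP [h2 _].
  case: (adj_to_v _ h1) => n1 o1; case: (adj_from_v _ h2) => n2 o2.
  have Eq := other_uniq _ _ n1 n2 o1 o2.
  move: up'; rewrite -cat_cons cat_uniq => /and3P [_ hh _].
  move/negP: hh; apply; apply/hasP; exists q; first by rewrite !inE eqxx orbT.
  by rewrite -Eq mem_last.
apply/connectP; exists p'; last exact: lastE.
apply: (sub_in_path (P := fun w => w != v)) pth'; last first.
  by apply/allP => w wp; apply: contraNneq vnot => <-.
move=> s t sv tv /existsP [e /andP [eA je]].
apply/existsP; exists e; rewrite je andbT /R !inE eA andbT.
apply/eqP => Ee; subst e.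
move: je; rewrite /joins => je.
have sv' : s <> v by apply/eqP.
have tv' : t <> v by apply/eqP.
case: ec_inc => h; case/orP: je => /andP [/eqP h1 /eqP h2]; congruence.
Qed.

Lemma K1 w : w != v -> conn ends R w v = false.
Proof.
move=> wv; apply/negP; rewrite /conn => /connectP [p pth lastE].
case/lastP: p pth lastE => [|p t] pth lastE.
  by rewrite /= lastE eqxx in wv.
rewrite last_rcons in lastE; subst t.
rewrite rcons_path in pth; case/andP: pth => _ /existsP [e /andP [eR je]].
move: eR; rewrite /R !inE => /andP [ne eA].
have ie : incident ends v e.
  by rewrite /incident; case/orP: je => /andP [h1 h2]; rewrite ?h1 ?h2 ?orbT.
by rewrite (F1 _ eA ie) eqxx in ne.
Qed.

Lemma cycle_facts : ec \in fund_cycle ends B ec /\ fund_cycle ends B ec \subset ec |: B.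
Proof.
move: HeaC; rewrite /fund_cycle; case: pickP => [C /andP [cyc sub]|_] /=; last by rewrite inE.
move=> _; split => //.
apply/negPn/negP => ecC; move: cyc; apply/negP; apply: (HBa C).
apply/subsetP => f fC; have := subsetP sub f fC; rewrite !inE => /orP [/eqP Ef|//].
by subst f; rewrite fC in ecC.
Qed.

Lemma in_cut_inc f : incident ends v f -> conn ends R v v ->
  f \in fund_cut ends A ec.
Proof.
move=> inf _; rewrite /fund_cut inE -/R.
have nlf := Hnoloop f; have nlc := Hnoloop ec.
rewrite /src /tgt in nlf nlc *.
move: inf; rewrite /incident /src /tgt.
case: ec_inc; rewrite /src /tgt => h; case/orP => /eqP h2;
  rewrite h h2 /conn connect0 ?andbT /=;
  first [apply/orP; left; apply: K2 | apply/orP; right; apply: K2];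
  apply/eqP => hh; move/eqP: nlf; move/eqP: nlc; congruence.
Qed.

Lemma notin_cut f : ~~ incident ends v f -> f \notin fund_cut ends A ec.
Proof.
rewrite /incident negb_or => /andP [s t].
rewrite /fund_cut inE -/R negb_or.
rewrite /src /tgt in s t *.
have k1 := K1 _ s; have k2 := K1 _ t.
by case: ec_inc; rewrite /src /tgt => h; rewrite h k1 k2 ?andbF ?andFb.
Qed.

Lemma key : fund_cut ends A ec :&: fund_cycle ends B ec = [set ec; ea].
Proof.
have [ecC subC] := cycle_facts.
have vv : conn ends R v v by exact: connect0.
apply/setP => f; rewrite in_setI in_set2.
have [->|nec] := eqVneq f ec.
  by rewrite ecC andbT ?eqxx (in_cut_inc ec _ vv) // Hinc !inE eqxx.
have [->|nea] := eqVneq f ea.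
  by rewrite HeaC andbT ?eqxx ?orbT (in_cut_inc ea _ vv) // Hinc !inE eqxx !orbT.
rewrite /=; apply/negP => /andP [fcut fC].
have [Efb|neb] := eqVneq f eb; first by move: HebC; rewrite -Efb fC.
have : ~~ incident ends v f by rewrite Hinc !inE (negPf nec) (negPf nea) (negPf neb).
by move/notin_cut; rewrite fcut.
Qed.

End Key.

Theorem mainTheorem16
  (V E : finType) (ends : E -> V * V)
  (Hnoloop : forall e : E, (ends e).1 != (ends e).2)
  (Hbisp : bispanning ends) (Hatom : atomic ends)
  (v x y z : V) (ex ey ez : E)
  (Hxyz : [/\ x != y, y != z & x != z])
  (Hedist : [/\ ex != ey, ey != ez & ex != ez])
  (Hjx : joins ends ex v x) (Hjy : joins ends ey v y) (Hjz : joins ends ez v z)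
  (Hdeg3 : [set e | incident ends v e] = [set ex; ey; ez])
  (S T : {set E})
  (HST : [disjoint S & T]) (HSTU : S :|: T = setT)
  (HS : spanning_tree ends S) (HT : spanning_tree ends T)
  (ec ea eb : E)
  (Habc : [set ec; ea; eb] = [set ex; ey; ez])
  (Hdist : [/\ ec != ea, ea != eb & ec != eb])
  (Hroles :
     (ec \in S /\ ea \in T /\ eb \in T /\
        ea \in fund_cycle ends T ec /\ eb \notin fund_cycle ends T ec)
     \/
     (ec \in T /\ ea \in S /\ eb \in S /\
        ea \in fund_cycle ends S ec /\ eb \notin fund_cycle ends S ec)) :
  tau3_arc ends ec ea S T.
Proof.
rewrite -Habc in Hdeg3.
case: HS => _ HSc HSa; case: HT => _ HTc HTa.
case: Hroles => [[h1 [h2 [h3 [h4 h5]]]]|[h1 [h2 [h3 [h4 h5]]]]].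
- left; do 2 split => //.
  apply: (@key V E ends Hnoloop S T v ec ea eb HST) => // u w; exact: HSc (in_setT u) (in_setT w).
- right; do 2 split => //.
  rewrite disjoint_sym in HST.
  apply: (@key V E ends Hnoloop T S v ec ea eb HST) => // u w; exact: HTc (in_setT u) (in_setT w).
Qed.
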